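(* Let $S,T$ be left inverse semi-braces, $\sigma:T\to\mathrm{Aut}(S)$ a homomorphism from $(T,\cdot)$ into the automorphism group of the left inverse semi-brace $S$ (write ${}^ua=\sigma(u)(a)$), $\delta:S\to\mathrm{End}(T)$ a map into the endomorphism semigroup of $(T,+)$ (write $u^a=\delta(a)(u)$), and $\mathfrak b:S\times S\to T$ a $\delta$-cocycle such that $$\mathfrak b\left(a\,{}^ub,\lambda_a({}^uc)\right)+(uv)^{\lambda_a({}^uc)}+u\left(\mathfrak b\left({}^{u^{-1}}(a^{-1}),c\right)+(u^{-1})^c\right)=u\left(\mathfrak b(b,c)+v^c\right)$$ for all $a,b,c\in S$ and $u,v\in T$. Then $S\times T$ with $$(a,u)+(b,v)=\left(a+b,\ \mathfrak b(a,b)+u^b+v\right),\qquad (a,u)(b,v)=(a\,{}^ub,\,uv)$$ is a left inverse semi-brace (the asymmetric product of $S$ and $T$ via $\sigma$, $\delta$, $\mathfrak b$).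
   Context: An inverse semigroup is a semigroup $(S,\cdot)$ in which for each $a$ there is a unique $a^{-1}$ with $aa^{-1}a=a$, $a^{-1}aa^{-1}=a^{-1}$. A left inverse semi-brace is a triple $(S,+,\cdot)$ with $(S,+)$ a semigroup, $(S,\cdot)$ an inverse semigroup and $a(b+c)=ab+a(a^{-1}+c)$ for all $a,b,c$; set $\lambda_a(b)=a(a^{-1}+b)$. An automorphism of the left inverse semi-brace $S$ is a bijection preserving both operations. Given semigroups $(S,+)$, $(T,+)$ and a map $\delta:S\to\mathrm{End}(T,+)$ with $u^a=\delta(a)(u)$, a $\delta$-cocycle is a map $\mathfrak b:S\times S\to T$ such that $\mathfrak b(a+b,c)+\mathfrak b(a,b)^c+(u^b)^c+v^c=\mathfrak b(a,b+c)+u^{b+c}+\mathfrak b(b,c)+v^c$ for all $a,b,c\in S$, $u,v\in T$. *)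

(* Defs.v *)
From mathcomp Require Import ssreflect ssrfun ssrbool.

Set Implicit Arguments.
Unset Strict Implicit.

Definition is_inverse_semigroup (S : Type) (mul : S -> S -> S) (inv : S -> S) : Prop :=
  associative mul /\
  (forall a : S,
     mul (mul a (inv a)) a = a /\ mul (mul (inv a) a) (inv a) = inv a) /\
  (forall a b : S,
     mul (mul a b) a = a -> mul (mul b a) b = b -> b = inv a).

Definition is_left_inverse_semibrace (S : Type)
    (add mul : S -> S -> S) (inv : S -> S) : Prop :=
  associative add /\
  is_inverse_semigroup mul inv /\
  (forall a b c : S, mul a (add b c) = add (mul a b) (mul a (add (inv a) c))).

Definition lambda (S : Type) (add mul : S -> S -> S) (inv : S -> S) (a b : S) : S :=
  mul a (add (inv a) b).

Definition is_semibrace_automorphism (S : Type) (add mul : S -> S -> S)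
    (f : S -> S) : Prop :=
  bijective f /\
  (forall a b, f (add a b) = add (f a) (f b)) /\
  (forall a b, f (mul a b) = mul (f a) (f b)).

Definition is_semigroup_endomorphism (T : Type) (add : T -> T -> T) (f : T -> T) : Prop :=
  forall u v, f (add u v) = add (f u) (f v).

Definition is_delta_cocycle (S T : Type) (addS : S -> S -> S) (addT : T -> T -> T)
    (delta : S -> T -> T) (bb : S -> S -> T) : Prop :=
  forall (a b c : S) (u v : T),
    addT (addT (addT (bb (addS a b) c) (delta c (bb a b))) (delta c (delta b u)))
         (delta c v)
    = addT (addT (addT (bb a (addS b c)) (delta (addS b c) u)) (bb b c)) (delta c v).

Definition asym_add (S T : Type) (addS : S -> S -> S) (addT : T -> T -> T)
    (delta : S -> T -> T) (bb : S -> S -> T) (x y : S * T) : S * T :=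
  (addS x.1 y.1, addT (addT (bb x.1 y.1) (delta y.1 x.2)) y.2).

Definition asym_mul (S T : Type) (mulS : S -> S -> S) (mulT : T -> T -> T)
    (sigma : T -> S -> S) (x y : S * T) : S * T :=
  (mulS x.1 (sigma x.2 y.1), mulT x.2 y.2).

(* Main.v *)
Require Import Defs.
From mathcomp Require Import ssreflect ssrfun ssrbool.

Theorem theorem52 (S T : Type)
    (addS mulS : S -> S -> S) (invS : S -> S)
    (addT mulT : T -> T -> T) (invT : T -> T)
    (sigma : T -> S -> S) (delta : S -> T -> T) (bb : S -> S -> T) :
  is_left_inverse_semibrace addS mulS invS ->
  is_left_inverse_semibrace addT mulT invT ->
  (* sigma : (T, .) -> Aut(S) is a homomorphism; sigma u a = ^u a *)
  (forall u, is_semibrace_automorphism addS mulS (sigma u)) ->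
  (forall u v a, sigma (mulT u v) a = sigma u (sigma v a)) ->
  (* delta : S -> End(T, +); delta a u = u^a *)
  (forall a, is_semigroup_endomorphism addT (delta a)) ->
  is_delta_cocycle addS addT delta bb ->
  (forall (a b c : S) (u v : T),
     let l := lambda addS mulS invS a (sigma u c) in
     addT (addT (bb (mulS a (sigma u b)) l) (delta l (mulT u v)))
          (mulT u (addT (bb (sigma (invT u) (invS a)) c) (delta c (invT u))))
     = mulT u (addT (bb b c) (delta c v))) ->
  exists invST : S * T -> S * T,
    is_left_inverse_semibrace (asym_add addS addT delta bb)
                              (asym_mul mulS mulT sigma) invST.
Proof.
move=> [addSA [[mulSA [HSinv HSuniq]] HSbr]] [addTA [[mulTA [HTinv HTuniq]] HTbr]]
  Hsig Hcomp Hdel Hcoc Hmain.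
have HsA : forall u x y, sigma u (addS x y) = addS (sigma u x) (sigma u y).
  by move=> u; case: (Hsig u) => _ [].
have HsM : forall u x y, sigma u (mulS x y) = mulS (sigma u x) (sigma u y).
  by move=> u; case: (Hsig u) => _ [].
have Hsinj : forall u, injective (sigma u).
  by move=> u; case: (Hsig u) => Hb _; apply: bij_inj.
have Hidem : forall e x, mulT e e = e -> sigma e x = x.
  move=> e x He; apply: (Hsinj e); by rewrite -Hcomp He.
have Hid1 : forall u x, sigma (mulT u (invT u)) x = x.
  move=> u x; apply: Hidem.
  by rewrite mulTA (proj1 (HTinv u)).
have Hid2 : forall u x, sigma (mulT (invT u) u) x = x.
  move=> u x; apply: Hidem.
  by rewrite mulTA (proj2 (HTinv u)).
exists (fun x => (sigma (invT x.2) (invS x.1), invT x.2)).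
split; [|split; [split; [|split]|]].
- move=> [a u] [b v] [c w]; rewrite /asym_add /=.
  have H := f_equal (addT^~ w) (Hcoc a b c u v).
  rewrite /= -!addTA in H.
  rewrite !Hdel -!addTA addSA H; done.
- move=> [a u] [b v] [c w]; rewrite /asym_mul /=.
  by rewrite HsM Hcomp mulSA mulTA.
- move=> [a u]; rewrite /asym_mul /=; split.
  + by rewrite -Hcomp Hid1 Hid1 (proj1 (HSinv a)) (proj1 (HTinv u)).
  + by rewrite -HsM Hid2 -HsM (proj2 (HSinv a)) (proj2 (HTinv u)).
- move=> [a u] [b v]; rewrite /asym_mul /= => H1 H2.
  case: H1 => H1a H1b; case: H2 => H2a H2b.
  have Ev := HTuniq u v H1b H2b; subst v.
  rewrite Hid1 in H1a; rewrite Hid2 in H2a.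
  have H2' := f_equal (sigma u) H2a.
  rewrite !HsM -Hcomp Hid1 in H2'.
  have E := HSuniq a (sigma u b) H1a H2'.
  by rewrite -E -Hcomp Hid2.
- move=> [a u] [b v] [c w]; rewrite /asym_mul /asym_add /=.
  have Hl : mulS a (sigma u (addS (sigma (invT u) (invS a)) c))
            = lambda addS mulS invS a (sigma u c)
    by rewrite /lambda HsA -Hcomp Hid1.
  rewrite Hl; congr (_, _).
    by rewrite HsA HSbr.
  move: (Hmain a b c u v) => /= H.
  rewrite (HTbr u (addT (bb b c) (delta c v)) w)
          (HTbr u (addT (bb (sigma (invT u) (invS a)) c) (delta c (invT u))) w).
  by rewrite -H addTA.
Qed.
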